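(* Let $\mathcal X$ and $\mathcal Y$ be countable spaces, each endowed with the discrete metric. If $\{\mu_n\}_{n\in\mathbb N}\subset\wp(\mathcal X\times\mathcal Y)$ converges to $\mu$ in the weak-* topology, then $\mu_n\to\mu$ in $\wp_I(\mathcal X\times\mathcal Y)$.
   Context: For a Polish space $\mathcal S$, $\wp(\mathcal S)$ denotes the Borel probability measures and $\wp_w(\mathcal S)$ this set with the weak-* topology (weakest topology making $\mu\mapsto\int g\,d\mu$ continuous for all bounded continuous $g$). For $\mu\in\wp(\mathcal X\times\mathcal Y)$, $\mu^{\mathcal X}$ is the marginal and $\mu(\cdot\mid x)$ a regular conditional distribution on $\mathcal Y$ given $x$. Let $\psi(\mu)\in\wp(\mathcal X\times\wp_w(\mathcal Y))$ be $\psi(\mu)(dx,d\zeta)=\delta_{\mu(\cdot\mid x)}(d\zeta)\mu^{\mathcal X}(dx)$. The topology of information on $\wp(\mathcal X\times\mathcal Y)$ is the coarsest topology making $\psi$ continuous into $\wp_w(\mathcal X\times\wp_w(\mathcal Y))$; $\wp_I(\mathcal X\times\mathcal Y)$ denotes $\wp(\mathcal X\times\mathcal Y)$ with it. *)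

(* Defs.v *)
From HB Require Import structures.
From mathcomp Require Import all_boot all_order all_algebra.
From mathcomp Require Import all_classical all_reals all_analysis.
Set Implicit Arguments.
Unset Strict Implicit.
Unset Printing Implicit Defensive.
Import Order.TTheory GRing.Theory Num.Theory.
Local Open Scope classical_set_scope.
Local Open Scope ring_scope.

Section InfoTopology.
Context {R : realType}.

Definition bounded_fun {T : Type} (g : T -> R) : Prop :=
  exists M : R, forall t, `|g t| <= M.

(* Weak-* convergence of a sequence of Borel probability measures on a space
   T carrying the discrete topology: every bounded function is continuous, so
   the test functions are all bounded real functions on T. *)
Definition weak_cvg_discrete {d} {T : measurableType d}
    (mu_ : nat -> probability T R) (mu : probability T R) : Prop :=
  forall g : T -> R, bounded_fun g ->
    ((fun n => \int[mu_ n]_t (g t)%:E) @ \oo --> \int[mu]_t (g t)%:E)%E.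

(* Continuity of G : X x P_w(Y) -> R, where X is discrete and P_w(Y) carries
   the weak-* topology, i.e. the initial topology of the maps
   nu |-> \int h dnu, h bounded (= bounded continuous on a discrete Y).
   Basic neighbourhoods of (x0, nu0) are {x0} x {nu | |\int h_i dnu -
   \int h_i dnu0| < delta, i < k} for finitely many bounded h_i. *)
Definition weak_continuous {dX dY} {X : measurableType dX}
    {Y : measurableType dY} (G : X -> probability Y R -> R) : Prop :=
  forall (x0 : X) (nu0 : probability Y R) (e : R), 0 < e ->
    exists (k : nat) (h : 'I_k -> Y -> R) (delta : R),
      0 < delta /\ (forall i, bounded_fun (h i)) /\
      forall nu : probability Y R,
        (forall i, (`| \int[nu]_y (h i y)%:E - \int[nu0]_y (h i y)%:E | <
                    delta%:E)%E) ->
        `| G x0 nu - G x0 nu0 | < e.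

Context {dX dY : measure_display} {X : measurableType dX}
  {Y : measurableType dY}.

Definition marginalX (mu : probability (X * Y)%type R) : measure X R :=
  measure_function_pushforward__canonical__measure_function_Measure
    mu (@measurable_fst _ _ X Y).

Lemma measurable_slab (hX : forall A : set X, measurable A) (x : X) :
  measurable ([set x] `*` [set: Y]).
Proof. by apply: measurableX => //; exact: hX. Qed.

Definition slice (hX : forall A : set X, measurable A)
    (mu : probability (X * Y)%type R) (x : X) : measure Y R :=
  measure_function_pushforward__canonical__measure_function_Measure
    (mrestr mu (measurable_slab hX x)) (@measurable_snd _ _ X Y).

(* A regular conditional distribution mu(. | x) of mu given x:
   mu({x} x B) / mu^X({x}) when mu^X({x}) > 0, and (arbitrarily) the Dirac
   mass at a fixed point of Y on the mu^X-null set where mu^X({x}) = 0. *)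
Definition cond (hX : forall A : set X, measurable A)
    (mu : probability (X * Y)%type R) (x : X) : probability Y R :=
  mnormalize (slice hX mu x) (dirac point).

(* \int G d(psi(mu)), where psi(mu)(dx, dzeta) = delta_{mu(.|x)}(dzeta)
   mu^X(dx): the integral of (x, zeta) |-> G x zeta against psi(mu) is
   \int G x (mu(.|x)) mu^X(dx). *)
Definition psi_integral (hX : forall A : set X, measurable A)
    (mu : probability (X * Y)%type R) (G : X -> probability Y R -> R) : \bar R :=
  (\int[marginalX mu]_x (G x (cond hX mu x))%:E)%E.

(* Convergence in the topology of information: psi(mu_n) -> psi(mu) in
   wp_w(X x wp_w(Y)), i.e. integrals of every bounded continuous
   G : X x wp_w(Y) -> R converge. *)
Definition info_cvg (hX : forall A : set X, measurable A)
    (mu_ : nat -> probability (X * Y)%type R)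
    (mu : probability (X * Y)%type R) : Prop :=
  forall G : X -> probability Y R -> R,
    (exists M : R, forall x nu, `|G x nu| <= M) -> weak_continuous G ->
    (fun n => psi_integral hX (mu_ n) G) @ \oo --> psi_integral hX mu G.

End InfoTopology.

(* Main.v *)
Require Import Defs.
From HB Require Import structures.
From mathcomp Require Import all_boot all_order all_algebra.
From mathcomp Require Import all_classical all_reals all_analysis measurable_realfun.
From mathcomp Require Import lra.
Import Order.TTheory GRing.Theory Num.Theory numFieldNormedType.Exports.
Local Open Scope classical_set_scope.
Local Open Scope ring_scope.

Section Gen.
Context {R : realType} {d : measure_display} {T : measurableType d}.
Hypothesis hT : forall A : set T, measurable A.

Lemma mfunR (D : set T) (f : T -> R) : measurable_fun D f.
Proof. by move=> _ B _; exact: hT. Qed.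

Lemma mfunE (D : set T) (f : T -> \bar R) : measurable_fun D f.
Proof. by move=> _ B _; exact: hT. Qed.

Lemma integrable_bd (P : probability T R) (f : T -> R) :
  Defs.bounded_fun f -> P.-integrable setT (EFin \o f).
Proof.
move=> [M hM]; apply/integrableP; split; first exact: mfunE.
apply: (@le_lt_trans _ _ (\int[P]_x (cst M%:E) x)%E).
  apply: ge0_le_integral.
  - by [].
  - by move=> x _; exact: abse_ge0.
  - exact: mfunE.
  - exact: mfunE.
  - by move=> x _ /=; rewrite lee_fin.
rewrite integral_cst //=.
by rewrite probability_setT mule1 ltry.
Qed.

Definition Ir (P : probability T R) (f : T -> R) : R :=
  fine (\int[P]_x (f x)%:E)%E.

Lemma IrE (P : probability T R) (f : T -> R) : Defs.bounded_fun f ->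
  (\int[P]_x (f x)%:E)%E = (Ir P f)%:E.
Proof.
move=> bf; rewrite /Ir fineK //.
exact: (integrable_fin_num measurableT (integrable_bd P _ bf)).
Qed.

Lemma bdB (f g : T -> R) : Defs.bounded_fun f -> Defs.bounded_fun g ->
  Defs.bounded_fun (fun t => f t - g t).
Proof.
move=> [M hM] [N hN]; exists (M + N) => t.
by rewrite (le_trans (ler_normB _ _)) // lerD.
Qed.

Lemma bd_norm (f : T -> R) : Defs.bounded_fun f -> Defs.bounded_fun (fun t => `|f t|).
Proof. by move=> [M hM]; exists M => t; rewrite normr_id. Qed.

Lemma IrB (P : probability T R) (f g : T -> R) : Defs.bounded_fun f -> Defs.bounded_fun g ->
  Ir P (fun t => f t - g t) = Ir P f - Ir P g.
Proof.
move=> bf bg; apply: EFin_inj; rewrite -IrE; last exact: bdB.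
rewrite EFinB -!IrE //.
under eq_integral do rewrite EFinB.
by apply: integralB_EFin => //; exact: integrable_bd.
Qed.

Lemma Ir_le (P : probability T R) (f g : T -> R) : Defs.bounded_fun f -> Defs.bounded_fun g ->
  (forall t, f t <= g t) -> Ir P f <= Ir P g.
Proof.
move=> bf bg fg; rewrite -lee_fin -!IrE //.
apply: le_integral => //; [exact: integrable_bd|exact: integrable_bd|].
by move=> t _; rewrite lee_fin.
Qed.

Lemma Ir_abs (P : probability T R) (f : T -> R) : Defs.bounded_fun f ->
  `|Ir P f| <= Ir P (fun t => `|f t|).
Proof.
move=> bf; rewrite -lee_fin -abse_EFin -!IrE //; last exact: bd_norm.
exact: (le_abse_integral _ _ (mfunE _ _)).
Qed.

Lemma Ir_cst (P : probability T R) (a : R) : Ir P (fun _ => a) = a.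
Proof.
rewrite /Ir integral_cst //=.
by rewrite probability_setT mule1.
Qed.

Lemma integrable_bdm (m : {measure set T -> \bar R}) (f : T -> R) :
  (m setT < +oo)%E -> Defs.bounded_fun f -> m.-integrable setT (EFin \o f).
Proof.
move=> mfin [M hM]; apply/integrableP; split; first exact: mfunE.
apply: (@le_lt_trans _ _ (\int[m]_x (cst M%:E) x)%E).
  apply: ge0_le_integral.
  - by [].
  - by move=> x _; exact: abse_ge0.
  - exact: mfunE.
  - exact: mfunE.
  - by move=> x _ /=; rewrite lee_fin.
rewrite integral_cst //=.
have mfn : m setT \is a fin_num by rewrite ge0_fin_numE.
by rewrite -(fineK mfn) -EFinM ltry.
Qed.

Lemma int_mrestr (m : {measure set T -> \bar R}) (D : set T) (mD : measurable D)
  (f : T -> \bar R) :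
  (\int[mrestr m mD]_x f x = \int[m]_(x in D) f x)%E.
Proof.
transitivity (\int[mrestr m mD]_x (f \_ D) x)%E.
  apply: ae_eq_integral => //; try exact: mfunE.
  exists (~` D); split; first exact: measurableC.
    by rewrite /= /mrestr setICl measure0.
  move=> x /= Px Dx; apply: Px => _; by rewrite /patch mem_set.
transitivity (\int[mrestr m mD]_(x in D) f x)%E.
  by rewrite [RHS]integral_mkcond.
apply: (eq_measure_integral m) => A mA AD.
by rewrite /= /mrestr setIidl.
Qed.

Lemma int_mscale (k : {nonneg R}) (m : {measure set T -> \bar R}) (f : T -> \bar R) :
  m.-integrable setT f ->
  (\int[mscale k m]_x f x = k%:num%:E * \int[m]_x f x)%E.
Proof.
move=> fi.
rewrite [in LHS]integralE [in RHS]integralE.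
rewrite ge0_integral_mscale //; do ?[exact: mfunE | by move=> x _; exact: funepos_ge0].
rewrite ge0_integral_mscale //; do ?[exact: mfunE | by move=> x _; exact: funeneg_ge0].
rewrite [in RHS]muleBr //.
apply: fin_num_adde_defl; rewrite fin_numN.
exact: integrable_neg_fin_num.
Qed.

End Gen.

Section Push.
Context {R : realType} {d1 d2 : measure_display} {T1 : measurableType d1}
  {T2 : measurableType d2}.
Hypothesis hT2 : forall A : set T2, measurable A.

Lemma int_push (m : {measure set T1 -> \bar R}) (phi : T1 -> T2)
  (mphi : measurable_fun setT phi) (f : T2 -> \bar R) :
  (\int[pushforward m phi]_y f y = \int[m]_x (f \o phi) x)%E.
Proof.
have hp := @ge0_integral_pushforward _ _ _ _ R phi mphi m setT (f^\+)%E
  measurableT (mfunE hT2 _ _) (ltac:(move=> y _; exact: funepos_ge0)).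
have hn := @ge0_integral_pushforward _ _ _ _ R phi mphi m setT (f^\-)%E
  measurableT (mfunE hT2 _ _) (ltac:(move=> y _; exact: funeneg_ge0)).
rewrite [in LHS]integralE [in RHS]integralE hp hn.
by rewrite preimage_setT -funepos_comp -funeneg_comp.
Qed.

End Push.

Section Main.
Context {R : realType} {dX dY : measure_display} {X : measurableType dX}
  {Y : measurableType dY}.
Hypotheses (hX : forall A : set X, measurable A)
  (hY : forall B : set Y, measurable B)
  (cX : countable [set: X]) (cY : countable [set: Y]).

Lemma mXY (A : set (X * Y)%type) : measurable A.
Proof.
apply: countable_measurable.
- move=> [x y].
  have -> : [set (x, y)] = [set x] `*` [set y].
    by apply/seteqP; split => [[a b]|[a b]] /=; [case=> -> ->|case=> -> ->].
  by apply: measurableX; [exact: hX|exact: hY].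
- apply: (sub_countable (subset_card_le (subsetT A))).
  by rewrite -setXTT; exact: countableX cX cY.
Qed.

Definition slab (x : X) : set (X * Y)%type := [set x] `*` [set: Y].

Lemma bd_slab (x : X) (h : Y -> R) : Defs.bounded_fun h ->
  Defs.bounded_fun (fun z : X * Y => \1_(slab x) z * h z.2).
Proof.
move=> [M hM]; exists M => z; rewrite indicE.
case: (z \in slab x); rewrite ?mul1r ?mul0r //.
by rewrite normr0 (le_trans (normr_ge0 _) (hM point)).
Qed.

Lemma cond_int (nu : probability (X * Y)%type R) (x : X) (h : Y -> R) :
  Defs.bounded_fun h -> nu (slab x) != 0%E ->
  (\int[cond hX nu x]_y (h y)%:E = 
   ((fine (nu (slab x)))^-1 * Ir nu (fun z => \1_(slab x) z * h z.2))%:E)%E.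
Proof.
move=> bh c0.
have fc : nu (slab x) \is a fin_num.
  rewrite ge0_fin_numE // (le_lt_trans (probability_le1 _ _)) ?ltry //.
  exact: mXY.
have S1 : slice hX nu x setT = nu (slab x).
  by rewrite /= /pushforward /mrestr preimage_setT setTI.
have cpos : 0 < fine (nu (slab x)).
  apply: fine_gt0; apply/andP; split; first by rewrite lt0e c0 /=.
  by rewrite -ge0_fin_numE.
have k0 : 0 <= (fine (nu (slab x)))^-1 by rewrite invr_ge0 ltW.
pose k : {nonneg R} := NngNum k0.
transitivity (\int[mscale k (slice hX nu x)]_y (h y)%:E)%E.
  apply: (eq_measure_integral (mscale k (slice hX nu x))) => A _ _.
  have ninf : (nu (slab x) == +oo)%E = false.
    by apply/negbTE; move: fc; rewrite fin_numE => /andP[].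
  rewrite /cond /= /mnormalize /= /pushforward /mrestr preimage_setT setTI -/(slab x) (negbTE c0) ninf /=.
  by rewrite /mscale /= muleC.
rewrite int_mscale //; last first.
  by apply: (integrable_bdm hY) => //; rewrite S1 -ge0_fin_numE.
rewrite (int_push hY _ _ measurable_snd) (int_mrestr mXY) integral_mkcond.
have -> : (((fun y : Y => (h y)%:E) \o snd) \_ ([set x] `*` [set: Y])) =
    (fun z => (\1_(slab x) z * h z.2)%:E).
  apply/funext => z; rewrite /patch indicE /=.
  by case: ifPn => _; rewrite ?mul1r ?mul0r.
by rewrite (IrE mXY nu _ (bd_slab x _ bh)) -EFinM.
Qed.

Variables (mu_ : nat -> probability (X * Y)%type R) (mu : probability (X * Y)%type R).
Hypothesis H : weak_cvg_discrete mu_ mu.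

Lemma hyp_r (g : X * Y -> R) : Defs.bounded_fun g ->
  (fun n => Ir (mu_ n) g) @ \oo --> Ir mu g.
Proof.
move=> bg; have := H _ bg; rewrite (IrE mXY mu _ bg).
by move/fine_cvg.
Qed.

Lemma Ir_slab (nu : probability (X * Y)%type R) (x : X) :
  Ir nu (fun z => \1_(slab x) z) = fine (nu (slab x)).
Proof. by rewrite /Ir integral_indic ?setIT //; exact: mXY. Qed.

Lemma bd_indic (A : set (X * Y)) : Defs.bounded_fun (fun z => \1_A z : R).
Proof. by exists 1 => z; rewrite indicE; case: (z \in A); rewrite ?normr1 ?normr0. Qed.

Lemma slab_cvg (x : X) :
  (fun n => fine (mu_ n (slab x))) @ \oo --> fine (mu (slab x)).
Proof.
have := hyp_r _ (bd_indic (slab x)).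
rewrite Ir_slab.
by under eq_fun do rewrite Ir_slab.
Qed.

Lemma cond_cvg (x : X) (h : Y -> R) (d : R) :
  Defs.bounded_fun h -> mu (slab x) != 0%E -> 0 < d ->
  \forall n \near \oo,
    (`| \int[cond hX (mu_ n) x]_y (h y)%:E - \int[cond hX mu x]_y (h y)%:E | < d%:E)%E.
Proof.
move=> bh c0 d0.
have cpos : 0 < fine (mu (slab x)).
  apply: fine_gt0; apply/andP; split; first by rewrite lt0e c0 /=.
  by rewrite (le_lt_trans (probability_le1 _ _)) ?ltry //; exact: mXY.
have cA := hyp_r _ (bd_slab x _ bh).
have cC := slab_cvg x.
have cn : \forall n \near \oo, 0 < fine (mu_ n (slab x)).
  by apply: (cvgr_gt (fine (mu (slab x)))).
have q : (fun n => (fine (mu_ n (slab x)))^-1 * Ir (mu_ n) (fun z => \1_(slab x) z * h z.2))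
    @ \oo --> (fine (mu (slab x)))^-1 * Ir mu (fun z => \1_(slab x) z * h z.2).
  apply: cvgM => //; apply: cvgV => //; exact: lt0r_neq0.
move/cvgrPdist_lt : q => /(_ d d0) q.
move: cn q; apply: filterS2 => n cnpos qn.
have cn0 : mu_ n (slab x) != 0%E.
  by apply/eqP => e0; move: cnpos; rewrite e0 /= ltxx.
rewrite (cond_int _ _ _ bh cn0) (cond_int _ _ _ bh c0) -EFinB abse_EFin lte_fin.
by rewrite distrC.
Qed.

Variables (G : X -> probability Y R -> R) (M : R).
Hypothesis hG : forall x nu, `|G x nu| <= M.
Hypothesis Gc : weak_continuous G.

Lemma G_cvg (x : X) : mu (slab x) != 0%E ->
  (fun n => G x (cond hX (mu_ n) x)) @ \oo --> G x (cond hX mu x).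
Proof.
move=> c0; apply/cvgrPdist_lt => e e0.
have [k [h [del [del0 [bh cont]]]]] := Gc x (cond hX mu x) e e0.
have : \forall n \near \oo, forall i, (`| \int[cond hX (mu_ n) x]_y (h i y)%:E -
    \int[cond hX mu x]_y (h i y)%:E | < del%:E)%E.
  by apply: filter_forall => i; exact: cond_cvg.
by apply: filterS => n hn; rewrite distrC; exact: cont.
Qed.

Definition F n (z : X * Y) := G z.1 (cond hX (mu_ n) z.1).
Definition F0 (z : X * Y) := G z.1 (cond hX mu z.1).
Definition phi n z := `|F n z - F0 z|.
Definition psi N z := sup [set phi n z | n in [set n | (N <= n)%N]].

Lemma phi_ge0 n z : 0 <= phi n z. Proof. exact: normr_ge0. Qed.

Lemma phi_le n z : phi n z <= M + M.
Proof. by apply: (le_trans (ler_normB _ _)); apply: lerD; exact: hG. Qed.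

Lemma psi_ub N n z : (N <= n)%N -> phi n z <= psi N z.
Proof.
move=> Nn; apply: ub_le_sup; last by exists n.
by exists (M + M) => _ [m _ <-]; exact: phi_le.
Qed.

Lemma psi_le N z a : (forall n, (N <= n)%N -> phi n z <= a) -> psi N z <= a.
Proof.
move=> ha; apply: ge_sup; first by exists (phi N z); exists N => //=.
by move=> _ [m Nm <-]; exact: ha.
Qed.

Lemma psi_ge0 N z : 0 <= psi N z.
Proof. exact: le_trans (phi_ge0 N z) (psi_ub N N z (leqnn N)). Qed.

Lemma psi_bd N z : psi N z <= M + M.
Proof. by apply: psi_le => n _; exact: phi_le. Qed.

Lemma psi_cvg (z : X * Y) : mu (slab z.1) != 0%E ->
  (fun N => psi N z) @ \oo --> 0.
Proof.
move=> c0; have := G_cvg z.1 c0.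
move/cvgrPdist_lt => hc; apply/cvgrPdist_lt => e e0.
have [K _ HK] := hc _ (divr_gt0 e0 (ltr0n _ 2)).
exists K => // N /= KN.
rewrite sub0r normrN ger0_norm ?psi_ge0 //.
apply: (@le_lt_trans _ _ (e / 2)); first apply: psi_le; last first.
  by rewrite ltr_pdivrMr // ltr_pMr // ltr1n.
move=> n Nn; rewrite /phi distrC ltW //.
by apply: HK; rewrite /= (leq_trans KN Nn).
Qed.

Lemma nullN : mu.-negligible [set z : (X * Y)%type | mu (slab z.1) = 0%E].
Proof.
have /pcard_geP[e] := cX.
have hb : mu.-negligible
    (\bigcup_k (slab (e k) `&` [set z : (X * Y)%type | mu (slab z.1) = 0%E])).
  apply: negligible_bigcup => k; apply/negligibleP; first exact: mXY.
  case: (pselect (mu (slab (e k)) = 0%E)) => [h0|h0].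
    apply/eqP; rewrite -measure_le0 -h0; apply: le_measure; rewrite ?inE.
    - exact: mXY.
    - exact: mXY.
    - exact: subIsetl.
  suff -> : slab (e k) `&` [set z : (X * Y)%type | mu (slab z.1) = 0%E] = set0.
    exact: measure0.
  apply/seteqP; split => // z [[/= ez _] hz]; apply: h0; by rewrite -ez.
apply: negligibleS hb => z Nz.
have [k _ ek] := @surj _ _ _ _ e z.1 I.
by exists k => //; split => //; rewrite /slab /=; split.
Qed.

Lemma psi_bdf N : Defs.bounded_fun (psi N).
Proof.
exists (M + M) => z; rewrite ger0_norm ?psi_ge0 //; exact: psi_bd.
Qed.

Lemma psi_int_cvg : (fun N => Ir mu (psi N)) @ \oo --> 0.
Proof.
have ff : {ae mu, forall z, setT z -> (fun N => (psi N z)%:E) @ \oo --> (cst 0%E z)}.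
  apply: negligibleS nullN => z /= nz; apply: contra_notP nz => c0 _.
  apply: cvg_EFin; first exact: nearW.
  by apply: psi_cvg; apply/eqP.
have ig : mu.-integrable setT (fun _ => (M + M)%:E).
  by apply: (integrable_bd mXY mu (fun _ => M + M)); exists `|M + M| => _.
have fg : {ae mu, forall z n, setT z -> `|(psi n z)%:E| <= (M + M)%:E}%E.
  apply: aeW => z n _.
  by rewrite abse_EFin lee_fin ger0_norm ?psi_ge0 // psi_bd.
have [_ _ cv] := @dominated_convergence _ _ R mu setT measurableT
  (fun N z => (psi N z)%:E) (cst 0%E) (fun _ => (M + M)%:E)
  (fun N => mfunE mXY _ _) (mfunE mXY _ _) ff ig fg.
move: cv; rewrite integral0.
under eq_fun do rewrite (IrE mXY mu _ (psi_bdf _)).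
by move/fine_cvg.
Qed.

Lemma bdF n : Defs.bounded_fun (F n).
Proof. by exists M => z; exact: hG. Qed.

Lemma bdF0 : Defs.bounded_fun F0.
Proof. by exists M => z; exact: hG. Qed.

Lemma main_r : (fun n => Ir (mu_ n) (F n)) @ \oo --> Ir mu F0.
Proof.
apply/cvgrPdist_lt => e e0.
have e30 : 0 < e / 3 by rewrite divr_gt0.
have [N _ HN] := (cvgrPdist_lt _ _).1 psi_int_cvg _ e30.
have HN' := HN N (leqnn N).
have cN := (cvgrPdist_lt _ _).1 (hyp_r _ (psi_bdf N)) _ e30.
have c0 := (cvgrPdist_lt _ _).1 (hyp_r _ bdF0) _ e30.
have cge : \forall n \near \oo, (N <= n)%N by exists N.
have {}cN := cN (filter_on_Filter _). have {}c0 := c0 (filter_on_Filter _).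
move: cge cN c0; apply: filterS3 => n Nn hp hb.
have q0 : 0 <= Ir mu (psi N).
  rewrite -(Ir_cst mXY mu 0); apply: (Ir_le mXY) => //; [|exact: psi_bdf|exact: psi_ge0].
  by exists 0 => _; rewrite normr0.
have hu : `|Ir (mu_ n) (fun z => F n z - F0 z)| <= Ir (mu_ n) (psi N).
  apply: (le_trans (Ir_abs mXY _ _ (bdB _ _ (bdF n) bdF0))).
  apply: (Ir_le mXY) => //; [exact: bd_norm _ (bdB _ _ (bdF n) bdF0)|exact: psi_bdf|].
  by move=> z; exact: psi_ub.
rewrite (IrB mXY _ _ _ (bdF n) bdF0) in hu.
move: hu hp hb HN'; rewrite sub0r normrN (ger0_norm q0).
rewrite ler_norml !ltr_norml => /andP[u1 u2] /andP[p1 p2] /andP[b1 b2] q1.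
apply/andP; split; lra.
Qed.

End Main.

Theorem theorem5 (R : realType) (dX dY : measure_display)
  (X : measurableType dX) (Y : measurableType dY)
  (hX : forall A : set X, measurable A) (hY : forall B : set Y, measurable B)
  (cX : countable [set: X]) (cY : countable [set: Y])
  (mu_ : nat -> probability (X * Y)%type R) (mu : probability (X * Y)%type R) :
  weak_cvg_discrete mu_ mu -> info_cvg hX mu_ mu.
Proof.
move=> H G [M hM] Gc.
have mxy := mXY hX hY cX cY.
have pE : forall nu : probability (X * Y)%type R,
    psi_integral hX nu G = (Ir nu (fun z => G z.1 (cond hX nu z.1)))%:E.
  move=> nu; rewrite /psi_integral /marginalX (int_push hX _ _ measurable_fst).
  by rewrite (IrE mxy nu); last by exists M => z; exact: hM.
rewrite pE; under eq_fun do rewrite pE.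
apply: cvg_EFin; first exact: nearW.
exact: (main_r hX hY cX cY mu_ mu H G M hM Gc).
Qed.
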